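(* Let $G=(V,E)$ be a finite graph with a staggered quantum walk given by tessellations $\mathcal{T}_1,\dots,\mathcal{T}_l$ (each polygon $P$ carrying a unit vector $\ket{P}=\sum_{v\in P}c_v^{(P)}\ket{v}$ supported on $P$), with local operators $U_j=2\sum_{P\in\mathcal{T}_j}\ket{P}\bra{P}-I$ on $\mathcal{H}^{|V|}$. Fix a vertex $u\in V$, and for each $j$ let $P_j$ be the polygon of $\mathcal{T}_j$ containing $u$, with $\ket{P_j}=\sum_{v\in P_j}c_v^{(j)}\ket{v}$. Let $\tilde G=(\tilde V,\tilde E)$, $\tilde V=\{0,1,\dots,k-1\}\cup (V\setminus\{u\})$, be the graph obtained by replacing $u$ with a $k$-clique on new vertices $0,\dots,k-1$, each adjacent to every neighbour of $u$ in $G$. Fix a unit vector $\ket{\tilde u}=\sum_{i=0}^{k-1}u_i\ket{i}\in\mathcal{H}^{|\tilde V|}$. Define the staggered quantum walk on $\tilde G$ with tessellations $\tilde{\mathcal{T}}_j$ obtained from $\mathcal{T}_j$ by replacing $P_j$ with $\tilde P_j=(P_j\setminus\{u\})\cup\{0,\dots,k-1\}$ and keeping all other polygons, where $\ket{\tilde P_j}=\sum_{v\in P_j\setminus\{u\}}c_v^{(j)}\ket{v}+c_u^{(j)}\ket{\tilde u}$ and every other polygon keeps its vector; set $\tilde U_j=2\sum_{\tilde P\in\tilde{\mathcal{T}}_j}\ket{\tilde P}\bra{\tilde P}-I$ on $\mathcal{H}^{|\tilde V|}$. Let $\ket{\psi}=\sum_{v\in V}a_v\ket{v}\in\mathcal{H}^{|V|}$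 be arbitrary and define $\ket{\tilde\psi}=\sum_{v\in V\setminus\{u\}}a_v\ket{v}+a_u\ket{\tilde u}\in\mathcal{H}^{|\tilde V|}$. Then for every $j\in\{1,\dots,l\}$, $$\braket{v|\tilde U_j|\tilde\psi}=\braket{v|U_j|\psi}\quad\text{for all } v\in V\setminus\{u\},\qquad \braket{\tilde u|\tilde U_j|\tilde\psi}=\braket{u|U_j|\psi}.$$ In particular, the local operators preserve the amplitudes of all vertices outside the intersection, and the probability of measuring (in the computational basis) $u$ after applying $U_j$ to $\ket\psi$ equals the probability of measuring one of the clique vertices $0,\dots,k-1$ after applying $\tilde U_j$ to $\ket{\tilde\psi}$.
   Context: A tessellation of a graph is a partition of its vertex set into cliques, called polygons; a tessellation cover is a set of tessellations such that every edge has both endpoints in a common polygon of some tessellation. A staggered quantum walk (SQW) on a graph with tessellation cover $\{\mathcal{T}_1,\dots,\mathcal{T}_l\}$ assigns to each polygon $P$ a unit vector $\ket{P}$ in the Hilbert space spanned by the computational basis $\{\ket{v}\}$ of vertices, supported on the vertices of $P$; its local operators are the reflections $U_j=2\sum_{P\in\mathcal{T}_j}\ket P\bra P-I$ and its evolution operator is $U=U_1U_2\cdots U_l$. Since each tessellation is a partition, $u$ lies in exactly one polygon $P_j$ of each $\mathcal{T}_j$. The same pair of walks arises in the ''intersection reduction'' direction: a SQW on $\tilde G$ in which the $k$ vertices of an intersection $I=\tilde P_1\cap\dots\cap\tilde P_l$ have, in every $\ket{\tilde P_j}$, amplitudes proportional to a common unit vector $\ket{\tilde u}$ supported on $I$,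 is reduced by collapsing $I$ to a single vertex $u$ and replacing $\ket{\tilde u}$ by $\ket u$. Inner products are conjugate-linear in the first argument. *)

(* Defs.v *)
(* Scalars: an arbitrary numClosedFieldType C (e.g. algC or
   complex R), which carries the complex conjugation z^*. *)
From HB Require Import structures.
From mathcomp Require Import all_boot all_order all_algebra.
Set Implicit Arguments. Unset Strict Implicit. Unset Printing Implicit Defensive.
Import Order.TTheory GRing.Theory Num.Theory.
Local Open Scope ring_scope.

Section SQW.
Variable C : numClosedFieldType.

Definition inner (X : finType) (x y : X -> C) : C := \sum_(w : X) (x w)^* * y w.

(* local operator U = 2 sum_{P in T} |P><P| - I applied to psi;
   vec P is the vector |P> attached to polygon P *)
Definition sqw_op (X : finType) (T : {set {set X}}) (vec : {set X} -> X -> C)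
  (psi : X -> C) : X -> C :=
  fun v => 2 * (\sum_(P in T) vec P v * inner (vec P) psi) - psi v.

Definition is_tessellation (X : finType) (adj : rel X) (T : {set {set X}}) : Prop :=
  partition T [set: X] /\
  (forall P, P \in T -> forall x y, x \in P -> y \in P -> x != y -> adj x y).

Definition polygon_vectors (X : finType) (T : {set {set X}}) (vec : {set X} -> X -> C)
  : Prop :=
  forall P, P \in T ->
    inner (vec P) (vec P) = 1 /\ (forall v, v \notin P -> vec P v = 0).

Definition tessellation_cover (X : finType) (adj : rel X) (l : nat)
  (T : 'I_l -> {set {set X}}) : Prop :=
  (forall j, is_tessellation adj (T j)) /\
  (forall x y, adj x y -> exists j, exists2 P, P \in T j & (x \in P) && (y \in P)).

Section Expand.
Variables (V : finType) (u : V) (k : nat).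

Definition tV : finType := ('I_k + {v : V | v != u})%type.

Definition liftS (P : {set V}) : {set tV} :=
  [set x : tV | match x with inl _ => u \in P | inr w => val w \in P end].

Definition unliftS (Q : {set tV}) : {set V} :=
  [set v : V | match insub v with
               | Some w => inr w \in Q
               | None => [exists i : 'I_k, inl i \in Q] end].

Variable ut : 'I_k -> C.

Definition tvec_u : tV -> C :=
  fun x => match x with inl i => ut i | inr _ => 0 end.

Definition tpoly_vec (c : V -> C) (P : {set V}) : tV -> C :=
  fun x => match x with
           | inl i => if u \in P then c u * ut i else 0
           | inr w => c (val w) end.

Definition tTess (T : {set {set V}}) : {set {set tV}} := [set liftS P | P in T].
Definition tVec (vec : {set V} -> V -> C) (Q : {set tV}) : tV -> C :=
  tpoly_vec (vec (unliftS Q)) (unliftS Q).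

Definition tstate (a : V -> C) : tV -> C :=
  fun x => match x with inl i => a u * ut i | inr w => a (val w) end.
End Expand.
End SQW.

(* Main.v *)
Require Import Defs.
From HB Require Import structures.
From mathcomp Require Import all_boot all_order all_algebra.
Import Order.TTheory GRing.Theory Num.Theory.
Local Open Scope ring_scope.

Set Implicit Arguments.
Section Aux.
Variables (C : numClosedFieldType) (V : finType) (u : V) (k : nat) (ut : 'I_k -> C).
Hypothesis hut : \sum_(i < k) (ut i)^* * ut i = 1.

Lemma k_pos : (0 < k)%N.
Proof.
case: k ut hut => // ut0; rewrite big_ord0 => /eqP; rewrite eq_sym oner_eq0.
done.
Qed.

Lemma unlift_lift (P : {set V}) : @unliftS V u k (liftS u k P) = P.
Proof.
apply/setP => v; rewrite inE.
case: insubP => [w wu wv|].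
  by rewrite inE wv.
move/negbNE/eqP => ->.
apply/existsP/idP => [[i]|H]; first by rewrite inE.
by exists (Ordinal k_pos); rewrite inE.
Qed.

Lemma lift_inj : injective (liftS u k).
Proof. by move=> P Q E; rewrite -(unlift_lift P) E unlift_lift. Qed.

Lemma sum_tV (f : tV u k -> C) :
  \sum_x f x = \sum_i f (inl i) + \sum_(w : {v : V | v != u}) f (inr w).
Proof. by rewrite big_sumType. Qed.

Lemma sum_sig (g : V -> C) :
  \sum_(w : {v : V | v != u}) g (val w) = \sum_(v | v != u) g v.
Proof. by rewrite -big_sub. Qed.

Lemma inner_lift (c a : V -> C) (P : {set V}) : (u \notin P -> c u = 0) ->
  inner (@tpoly_vec C V u k ut c P) (@tstate C V u k ut a) = inner c a.
Proof.
move=> hc; rewrite /inner sum_tV /= (sum_sig (fun v => (c v)^* * a v)) [in RHS](bigD1 u) //=; congr (_ + _).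
have -> : \sum_i (if u \in P then c u * ut i else 0)^* * (a u * ut i)
          = (c u)^* * a u * \sum_i (ut i)^* * ut i.
  rewrite big_distrr /=; apply: eq_bigr => i _.
  case: ifP => uP; first by rewrite rmorphM /= mulrACA.
  by rewrite hc ?uP // rmorph0 !mul0r.
by rewrite hut mulr1.
Qed.
End Aux.
Unset Implicit Arguments.

Theorem theorem1 (C : numClosedFieldType) (V : finType) (adj : rel V)
  (l : nat) (T : 'I_l -> {set {set V}}) (vec : 'I_l -> {set V} -> V -> C)
  (u : V) (k : nat) (ut : 'I_k -> C) (a : V -> C) :
  symmetric adj -> irreflexive adj ->
  tessellation_cover adj T ->
  (forall j, polygon_vectors (T j) (vec j)) ->
  \sum_(i < k) (ut i)^* * ut i = 1 ->
  forall j : 'I_l,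
    let U_psi := sqw_op (T j) (vec j) a in
    let tU_tpsi := sqw_op (tTess u k (T j)) (@tVec C V u k ut (vec j)) (@tstate C V u k ut a) in
    [/\ forall w : {v : V | v != u}, tU_tpsi (inr w) = U_psi (val w),
        inner (@tvec_u C V u k ut) tU_tpsi = U_psi u
      & \sum_(i < k) `|tU_tpsi (inl i)| ^+ 2 = `|U_psi u| ^+ 2].
Proof.
move=> _ _ _ hpv hut j U_psi tU_tpsi.
have hsum : forall (F : {set V} -> (tV u k -> C) -> C -> C),
  \sum_(Q in tTess u k (T j)) F (@unliftS V u k Q) (@tVec C V u k ut (vec j) Q)
      (inner (@tVec C V u k ut (vec j) Q) (@tstate C V u k ut a))
  = \sum_(P in T j) F P (@tpoly_vec C V u k ut (vec j P) P) (inner (vec j P) a).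
  move=> F; rewrite /tTess big_imset /=; last by move=> P Q _ _; apply: (@lift_inj C V u k ut hut).
  apply: eq_bigr => P PT; rewrite /tVec (@unlift_lift C V u k ut hut).
  by rewrite (@inner_lift C V u k ut hut) // => uP; case: (hpv j P PT) => _ ->.
have hw : forall w, tU_tpsi (inr w) = U_psi (val w).
  move=> w; rewrite /tU_tpsi /U_psi /sqw_op /=.
  have := hsum (fun P v c => v (inr w) * c); rewrite /=.
  by move=> ->.
have hi : forall i, tU_tpsi (inl i) = ut i * U_psi u.
  move=> i; rewrite /tU_tpsi /U_psi /sqw_op /=.
  have := hsum (fun P v c => v (inl i) * c); rewrite /= => ->.
  rewrite mulrBr; congr (_ - _); last by rewrite mulrC.
  rewrite mulrCA; congr (_ * _); rewrite big_distrr /=; apply: eq_bigr => P PT.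
  case: ifP => uP; first by rewrite mulrAC mulrC.
  by case: (hpv j P PT) => _ ->; rewrite ?uP // !mul0r mulr0.
split => //.
  rewrite /inner sum_tV /= [X in _ + X]big1 ?addr0; last by move=> w _; rewrite conjC0 mul0r.
  rewrite (eq_bigr (fun i => (ut i)^* * ut i * U_psi u)); last by move=> i _; rewrite hi mulrA.
  by rewrite -big_distrl hut; apply: mul1r.
rewrite (eq_bigr (fun i => (ut i)^* * ut i * `|U_psi u| ^+ 2)); last by move=> i _; rewrite hi normrM exprMn (normCKC (ut i)).
by rewrite -big_distrl hut; apply: mul1r.
Qed.
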